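(* For all integers $n\geq 1$ and all real $x\in(0,2\pi/3)$, $$\sum_{k=1}^n (n-k+1)(n-k+2)\,k\sin(kx)>\frac{2}{9}\sin(x)\bigl(1+2\cos(x)\bigr)^2,$$ and the constant $2/9$ is best possible: the inequality $\sum_{k=1}^n (n-k+1)(n-k+2)k\sin(kx)>\lambda\sin(x)(1+2\cos x)^2$ for all $n\ge1$, $x\in(0,2\pi/3)$ fails for every $\lambda>2/9$. *)

(* Defs.v *)
From Stdlib Require Import Reals Lra.
Open Scope R_scope.

Definition S (n : nat) (x : R) : R :=
  sum_f 1 n (fun k => (INR n - INR k + 1) * (INR n - INR k + 2) * INR k * sin (INR k * x)).

(* Main.v *)
Require Import Defs.
From Stdlib Require Import Reals Lra Nsatz Psatz.
Open Scope R_scope.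

Definition Vq (n : nat) (x : R) := sum_f_R0 (fun k => INR k * sin (INR k * x)) n.
Definition Uq (n : nat) (x : R) := sum_f_R0 (fun k => (INR n - INR k + 1) * INR k * sin (INR k * x)) n.
Definition Sq (n : nat) (x : R) := sum_f_R0 (fun k => (INR n - INR k + 1) * (INR n - INR k + 2) * INR k * sin (INR k * x)) n.

Lemma S_Sq : forall n x, (1 <= n)%nat -> S n x = Sq n x.
Proof.
  intros n x Hn. unfold S, Sq, sum_f.
  rewrite (decomp_sum _ n) by lia. simpl (INR 0). rewrite !Rmult_0_r, Rmult_0_l, Rplus_0_l.
  replace (pred n) with (n - 1)%nat by lia.
  apply sum_eq. intros i _. rewrite (S_INR i). replace (INR (i+1)) with (INR i + 1) by (rewrite plus_INR; simpl; ring). reflexivity.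
Qed.

Lemma Uq_rec : forall n x, Uq (Datatypes.S n) x = Uq n x + Vq (Datatypes.S n) x.
Proof.
  intros n x. unfold Uq, Vq. rewrite !tech5.
  assert (H: sum_f_R0 (fun k => (INR (Datatypes.S n) - INR k + 1) * INR k * sin (INR k * x)) n =
     sum_f_R0 (fun k => (INR n - INR k + 1) * INR k * sin (INR k * x)) n +
     sum_f_R0 (fun k => INR k * sin (INR k * x)) n).
  { rewrite <- plus_sum. apply sum_eq. intros i _. rewrite S_INR. ring. }
  rewrite H. rewrite S_INR. ring.
Qed.

Lemma Sq_rec : forall n x, Sq (Datatypes.S n) x = Sq n x + 2 * Uq (Datatypes.S n) x.
Proof.
  intros n x. unfold Sq, Uq. rewrite !tech5.
  assert (H: sum_f_R0 (fun k => (INR (Datatypes.S n) - INR k + 1) * (INR (Datatypes.S n) - INR k + 2) * INR k * sin (INR k * x)) n =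
     sum_f_R0 (fun k => (INR n - INR k + 1) * (INR n - INR k + 2) * INR k * sin (INR k * x)) n +
     2 * sum_f_R0 (fun k => (INR (Datatypes.S n) - INR k + 1) * INR k * sin (INR k * x)) n).
  { rewrite scal_sum, <- plus_sum. apply sum_eq. intros i _. rewrite S_INR. ring. }
  rewrite H. rewrite S_INR. ring.
Qed.

Lemma Vq_S : forall n x, Vq (Datatypes.S n) x = Vq n x + INR (Datatypes.S n) * sin (INR (Datatypes.S n) * x).
Proof. intros. unfold Vq. rewrite tech5. reflexivity. Qed.

Lemma sc1 : forall t, sin t * sin t + cos t * cos t = 1.
Proof. intro t. pose proof (sin2_cos2 t). unfold Rsqr in H. lra. Qed.

Lemma Vq_closed : forall n t,
  4 * (sin t * sin t) * Vq n (2*t) = cos t * sin ((2*INR n+1)*t) - (2*INR n+1) * sin t * cos ((2*INR n+1)*t).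
Proof.
  intros n t. induction n as [|n IH].
  - unfold Vq. simpl. replace ((2*0+1)*t) with t by ring. ring.
  - rewrite Vq_S.
    set (A := (2 * INR n + 1) * t) in *.
    replace ((2 * INR (Datatypes.S n) + 1) * t) with (A + 2*t) by (unfold A; rewrite S_INR; ring).
    replace (INR (Datatypes.S n) * (2*t)) with (A + t) by (unfold A; rewrite S_INR; ring).
    rewrite S_INR. rewrite !sin_plus, !cos_plus, sin_2a, cos_2a.
    pose proof (sc1 t).
    nsatz.
Qed.

Lemma Uq_closed : forall n t,
  4 * (sin t * sin t * sin t) * Uq n (2*t) = cos t * (1 - cos ((2*INR n+2)*t)) - (INR n+1) * sin t * sin ((2*INR n+2)*t).
Proof.
  intros n t. induction n as [|n IH].
  - unfold Uq. simpl. replace ((2*0+2)*t) with (2*t) by ring. rewrite sin_2a, cos_2a.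
    pose proof (sc1 t). nsatz.
  - rewrite Uq_rec. pose proof (Vq_closed (Datatypes.S n) t) as HV.
    set (B := (2 * INR n + 2) * t) in *.
    replace ((2 * INR (Datatypes.S n) + 2) * t) with (B + 2*t) by (unfold B; rewrite S_INR; ring).
    replace ((2 * INR (Datatypes.S n) + 1) * t) with (B + t) in HV by (unfold B; rewrite S_INR; ring).
    rewrite S_INR in *. rewrite !sin_plus, !cos_plus, sin_2a, cos_2a in *.
    pose proof (sc1 t).
    nsatz.
Qed.

Lemma Sq_closed : forall n t,
  8 * (sin t * sin t * sin t * sin t) * Sq n (2*t) =
  (2*INR n+3) * sin t * (2 * cos t + cos ((2*INR n+3)*t)) - 3 * cos t * sin ((2*INR n+3)*t).
Proof.
  intros n t. induction n as [|n IH].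
  - unfold Sq. simpl. replace ((2*0+3)*t) with (2*t + t) by ring.
    rewrite sin_plus, cos_plus, sin_2a, cos_2a.
    pose proof (sc1 t). nsatz.
  - rewrite Sq_rec. pose proof (Uq_closed (Datatypes.S n) t) as HU.
    set (D := (2 * INR n + 3) * t) in *.
    replace ((2 * INR (Datatypes.S n) + 3) * t) with (D + 2*t) by (unfold D; rewrite S_INR; ring).
    replace ((2 * INR (Datatypes.S n) + 2) * t) with (D + t) in HU by (unfold D; rewrite S_INR; ring).
    rewrite S_INR in *. rewrite !sin_plus, !cos_plus, sin_2a, cos_2a in *.
    pose proof (sc1 t).
    nsatz.
Qed.

Definition hh (j : nat) (t : R) := cos t * sin (INR j * t) - INR j * sin t * cos (INR j * t).
Definition Phi (m : nat) (t : R) := sum_f_R0 (fun j => sin (INR j * t) * hh j t) m.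

Lemma Phi_closed : forall m t,
  8 * sin t * Phi m t = (2*INR m+1) * sin t * (2 * cos t + cos ((2*INR m+1)*t)) - 3 * cos t * sin ((2*INR m+1)*t).
Proof.
  intros m t. induction m as [|m IH].
  - unfold Phi, hh. simpl sum_f_R0. simpl INR. rewrite !Rmult_0_l, sin_0. replace ((2*0+1)*t) with t by ring. ring.
  - unfold Phi in *. rewrite tech5. unfold hh at 2.
    set (B := INR (Datatypes.S m) * t) in *.
    replace ((2 * INR m + 1) * t) with (2*B - t) in IH by (unfold B; rewrite S_INR; ring).
    replace ((2 * INR (Datatypes.S m) + 1) * t) with (2*B + t) by (unfold B; rewrite S_INR; ring).
    rewrite S_INR in *. rewrite sin_plus, cos_plus, sin_minus, cos_minus, !sin_2a, !cos_2a in *.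
    pose proof (sc1 t). pose proof (sc1 B).
    nsatz.
Qed.
Lemma sin_ge3 : forall z, 0 <= z -> z <= 4 -> z - z^3/6 <= sin z.
Proof.
  intros z H0 H1. destruct (pre_sin_bound z 0 H0 H1) as [H _].
  unfold sin_approx, sin_term in H. simpl in H. lra.
Qed.
Lemma sin_le_id : forall z, 0 <= z -> z <= 4 -> sin z <= z.
Proof.
  intros z H0 H1. destruct (pre_sin_bound z 0 H0 H1) as [_ H].
  unfold sin_approx, sin_term in H. simpl in H.
  assert (0 <= z*z*z) by (apply Rmult_le_pos; [apply Rmult_le_pos|];lra).
  assert (0 <= z*z*z*(20 - z*z)) by (apply Rmult_le_pos; nra).
  lra.
Qed.
Lemma cos_ge2 : forall z, -2 <= z -> z <= 2 -> 1 - z^2/2 <= cos z.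
Proof.
  intros z H0 H1. destruct (pre_cos_bound z 0 H0 H1) as [H _].
  unfold cos_approx, cos_term in H. simpl in H. lra.
Qed.
Lemma G_core : forall N s c p q, 0<s -> 0<c -> s*s+c*c=1 -> p*p+q*q=1 -> 0 < 4*c*c-1 -> 9/2 <= N ->
  4*N*N*s*s*(4*c*c-1) - 9*N*s*s*c*c - 9*c*c > 0 ->
  2*N*s*(2*c+q) - 3*c*p > 32/9*s^5*c*(4*c*c-1)^2.
Proof.
  intros N s c p q Hs Hc Hsc Hpq Hw HN Hcond.
  set (w := 4*c*c-1) in *.
  assert (hw : w = 3 - 4*s*s) by (unfold w; nra).
  assert (h1 : s*s*w <= 9/16) by (rewrite hw; assert (0 <= (2*s*s-3/4)*(2*s*s-3/4)) by apply Rle_0_sqr; nra).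
  assert (h1' : 0 <= s*s*w) by (apply Rmult_le_pos; nra).
  assert (h2 : (s*s*w)*(s*s*w) <= 81/256).
  { assert (h3 := Rmult_le_compat _ _ _ _ h1' h1' h1 h1). lra. }
  set (B := 32/9*s^5*c*w^2).
  assert (hB : B = 32/9*(s*c)*((s*s*w)*(s*s*w))) by (unfold B; ring).
  assert (hsc : 0 < s*c) by nra.
  assert (hB1 : B <= 9/8*(s*c)) by (rewrite hB; nra).
  assert (hB0 : 0 <= B) by (rewrite hB; nra).
  set (K := 4*N*s*c - B).
  assert (hK : 0 < K) by (unfold K; nra).
  set (X := 2*N*s*q - 3*c*p).
  assert (hX : X*X <= 4*N*N*s*s + 9*c*c).
  { assert (E : X*X + (2*N*s*p + 3*c*q)*(2*N*s*p + 3*c*q) = (4*N*N*s*s + 9*c*c)*(p*p+q*q)) by (unfold X; ring).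
    rewrite Hpq in E. assert (0 <= (2*N*s*p + 3*c*q)*(2*N*s*p + 3*c*q)) by apply Rle_0_sqr. lra. }
  assert (hK2 : K*K >= 16*N*N*s*s*c*c - 9*N*s*s*c*c).
  { assert (EK : K*K = 16*N*N*s*s*c*c - 8*N*s*c*B + B*B) by (unfold K; ring).
    assert (8*N*s*c*B <= 8*N*s*c*(9/8*(s*c))) by (apply Rmult_le_compat_l; nra).
    assert (0 <= B*B) by apply Rle_0_sqr. lra. }
  assert (hKX : X*X < K*K).
  { assert (EE : 16*N*N*s*s*c*c - 9*N*s*s*c*c - (4*N*N*s*s + 9*c*c) = 4*N*N*s*s*w - 9*N*s*s*c*c - 9*c*c) by (unfold w; ring). lra. }
  assert (K + X > 0) by nra.
  unfold K, X in *. lra.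
Qed.
Lemma r3b : forall r, r*r = 3 -> 0 < r -> 1.732 <= r <= 1.7321.
Proof. intros r H H0. split; nra. Qed.

Lemma R3geom : forall r a b e, r*r = 3 -> 0 < r -> 0 < e -> e <= 1/9 ->
  1 - e^2/2 <= a -> a <= 1 -> e - e^3/6 <= b -> b <= e ->
  let s := r/2*a - b/2 in let c := a/2 + r/2*b in
  4/5 <= s /\ 1/2 <= c <= 3/5 /\ 2*s*(2*c-1) - 6*c*e >= -10*e^2 /\
  0 <= 4*c*c-1 <= 19/5*e.
Proof.
  intros r a b e Hr Hr0 He0 He1 Ha1 Ha2 Hb1 Hb2 s c.
  destruct (r3b r Hr Hr0) as [Hr1 Hr2].
  assert (He2 : e*e <= e/9) by nra.
  assert (He3 : e^3 <= e/81) by (simpl; nra).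
  assert (hs : 4/5 <= s) by (unfold s; simpl in *; nra).
  assert (hc1 : 1/2 <= c) by (unfold c; simpl in *; nra).
  assert (hc2 : c <= 3/5) by (unfold c; simpl in *; nra).
  split; [exact hs|]. split; [lra|]. split.
  - set (al := 1 - a). set (be := e - b).
    assert (0 <= al <= e^2/2) by (unfold al; lra).
    assert (0 <= be <= e^3/6) by (unfold be; lra).
    assert (Eq0 : forall r a b e, r*r = 3 -> (r*a - b)*((a + r*b)-1) - 3*(a + r*b)*e = - r*(1-a) - 3*(e-b) + (1-a)*e + r*(1-a)*(1-a) + 2*(1-a)*(e-b) - 4*r*e*e + 5*r*(e-b)*e - r*(e-b)*(e-b)) by (intros; nsatz).
    assert (Eq : 2*s*(2*c-1) - 6*c*e = - r*al - 3*be + al*e + r*al*al + 2*al*be - 4*r*e*e + 5*r*be*e - r*be*be).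
    { unfold al, be. rewrite <- (Eq0 r a b e Hr). unfold s, c. field. }
    rewrite Eq. simpl in *.
    assert (r*al <= 1.7321*(e*(e*1))/2) by nra.
    assert (0 <= al*e) by nra. assert (0 <= r*al*al) by (apply Rmult_le_pos; nra).
    assert (0 <= al*be) by nra. assert (0 <= r*be*e) by (apply Rmult_le_pos; nra).
    assert (be <= e*e/54) by nra.
    assert (be*be <= e*e/54) by nra.
    assert (r*be*be <= 2*(e*e/54)) by nra.
    assert (r*e*e <= 1.7321*(e*e)) by nra.
    lra.
  - split. nra.
    assert (2*c <= 1 + r*e) by (unfold c; nra).
    nra.
Qed.
Lemma R3A : forall N s c e sg kp B, 9/2 <= N -> 0 < e -> N*e <= 1/2 -> 4/5 <= s <= 1 -> 1/2 <= c <= 3/5 ->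
  N*e - (N*e)^3/6 <= sg -> sg <= N*e -> 0 <= kp <= 1 -> 2*s*(2*c-1) - 6*c*e >= -10*e^2 -> B <= 31*e^2 ->
  2*N*s*(2*c + 2*sg*sg - 1) - 6*c*sg*kp > B.
Proof.
  intros N s c e sg kp B HN He HNe Hs Hc Hsg1 Hsg2 Hkp HE HB.
  remember (N*e) as th eqn:Eth.
  assert (Hth : 0 < th) by (rewrite Eth; nra).
  assert (Hsg3 : 23/24*th <= sg) by (simpl in Hsg1; nra).
  assert (Hsg0 : 0 <= sg) by lra.
  assert (H1 : sg*kp <= th) by nra.
  assert (H2 : (23/24*th)*(23/24*th) <= sg*sg) by (apply Rmult_le_compat; lra).
  assert (H3 : 6*c*(sg*kp) <= 6*c*th) by (apply Rmult_le_compat_l; lra).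
  assert (H4 : 2*N*s*(2*c + 2*sg*sg - 1) - 6*c*sg*kp >= N*(2*s*(2*c-1) - 6*c*e) + 4*N*s*((23/24*th)*(23/24*th))).
  { assert (4*N*s*((23/24*th)*(23/24*th)) <= 4*N*s*(sg*sg)) by (apply Rmult_le_compat_l; nra).
    rewrite Eth in *. nra. }
  assert (H5 : N*(2*s*(2*c-1) - 6*c*e) >= N*(-10*e^2)) by (apply Rmult_ge_compat_l; lra).
  assert (H6 : 4*N*s*((23/24*th)*(23/24*th)) = (4*529/576)*N*N*N*s*(e*e)) by (rewrite Eth; field).
  assert (H7 : N*N*s >= 81/5) by (assert (N*N >= 81/4) by nra; nra).
  assert (H7' : N*((4*529/576)*(N*N*s) - 10) >= 200) by nra.
  assert (H8 : 0 < e*e) by nra.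
  assert (H9 : N*((4*529/576)*(N*N*s) - 10)*(e*e) >= 200*(e*e)) by (apply Rmult_ge_compat_r; lra).
  simpl in *. nra.
Qed.

Lemma R3B : forall N s c e C D B, 9/2 <= N -> 0 < e -> e <= 1/9 -> 4/5 <= s <= 1 -> 1/2 <= c <= 3/5 ->
  19/100 <= C*C -> C*C + D*D = 1 -> B <= 31*e^2 ->
  2*N*s*(2*c + 2*C*C - 1) - 6*c*D*C > B.
Proof.
  intros N s c e C D B HN He He1 Hs Hc HC HCD HB.
  assert (HB2 : B <= 31/81) by (simpl in HB; nra).
  set (g := Rabs C).
  assert (Hg : g*g = C*C) by (unfold g; rewrite <- Rabs_mult, Rabs_right; nra).
  assert (Hg0 : 0 <= g) by (unfold g; apply Rabs_pos).
  assert (Hg1 : 43/100 <= g) by nra.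
  assert (HD : D*D <= 1) by nra.
  assert (HDC : D*C <= g).
  { unfold g. destruct (Rcase_abs C); [rewrite Rabs_left by lra | rewrite Rabs_right by lra]; nra. }
  assert (H1 : 6*c*(D*C) <= 6*c*g) by (apply Rmult_le_compat_l; lra).
  assert (H2 : 2*N*s*(2*c-1) >= 0) by (apply Rle_ge; apply Rmult_le_pos; [apply Rmult_le_pos|]; lra).
  assert (H3a : N*s >= 18/5) by nra.
  assert (H3b : N*s*g >= 18/5*(43/100)) by (apply Rmult_ge_compat; lra).
  assert (H3c : 4*N*s*g - 6*c >= 2) by nra.
  assert (H3 : 4*N*s*(g*g) - 6*c*g >= 43/100*2).
  { replace (4*N*s*(g*g) - 6*c*g) with (g*(4*N*s*g - 6*c)) by ring. apply Rmult_ge_compat; lra. }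
  nra.
Qed.

Lemma hh_rec : forall j t, hh (Datatypes.S j) t = cos t * hh j t + INR (Datatypes.S j) * (sin t * sin t) * sin (INR j * t).
Proof.
  intros j t. unfold hh. rewrite S_INR.
  replace ((INR j + 1) * t) with (INR j * t + t) by ring.
  rewrite sin_plus, cos_plus. pose proof (sc1 t). nsatz.
Qed.

Lemma hh_nonneg : forall j t, 0 <= t -> 0 <= cos t -> (INR j - 1) * t <= PI -> 0 <= hh j t.
Proof.
  induction j as [|j IH]; intros t Ht Hc Hj.
  - unfold hh. simpl. rewrite Rmult_0_l, sin_0, cos_0. lra.
  - rewrite hh_rec. rewrite S_INR in Hj.
    assert (H1 : INR j * t <= PI) by lra.
    assert (H0 : 0 <= INR j * t) by (apply Rmult_le_pos; [apply pos_INR|lra]).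
    assert (Hh : 0 <= hh j t) by (apply IH; auto; nra).
    assert (Hs : 0 <= sin (INR j * t)) by (apply sin_ge_0; lra).
    assert (0 <= INR (Datatypes.S j)) by apply pos_INR.
    assert (0 <= sin t * sin t) by apply Rle_0_sqr.
    assert (0 <= cos t * hh j t) by (apply Rmult_le_pos; lra).
    assert (0 <= INR (Datatypes.S j) * (sin t * sin t) * sin (INR j * t)) by (apply Rmult_le_pos; [apply Rmult_le_pos|]; lra).
    lra.
Qed.

Lemma Phi2 : forall t, Phi 2 t = 4 * (sin t * sin t * sin t * sin t) * cos t.
Proof.
  intro t. unfold Phi, hh. simpl sum_f_R0.
  replace (INR 0) with 0 by reflexivity. replace (INR 1) with 1 by reflexivity.
  replace (INR 2) with 2 by (simpl; ring).
  rewrite Rmult_0_l, sin_0, !Rmult_1_l. rewrite sin_2a, cos_2a.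
  pose proof (sc1 t). nsatz.
Qed.

Lemma Phi_ge : forall k t, 0 <= t -> 0 <= cos t -> INR (2 + k) * t <= PI ->
  Phi (2 + k) t >= 4 * (sin t * sin t * sin t * sin t) * cos t.
Proof.
  induction k as [|k IH]; intros t Ht Hc Hk.
  - rewrite Nat.add_0_r, Phi2. lra.
  - replace (2 + Datatypes.S k)%nat with (Datatypes.S (2 + k)) in * by lia.
    unfold Phi. rewrite tech5. fold (Phi (2 + k) t).
    rewrite S_INR in Hk.
    assert (H0 : 0 <= INR (2+k) * t) by (apply Rmult_le_pos; [apply pos_INR|lra]).
    assert (IH' := IH t Ht Hc ltac:(nra)).
    assert (Hs : 0 <= sin (INR (Datatypes.S (2 + k)) * t)) by (apply sin_ge_0; rewrite S_INR; nra).
    assert (Hh : 0 <= hh (Datatypes.S (2 + k)) t) by (apply hh_nonneg; auto; rewrite S_INR; nra).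
    assert (0 <= sin (INR (Datatypes.S (2 + k)) * t) * hh (Datatypes.S (2 + k)) t) by (apply Rmult_le_pos; lra).
    lra.
Qed.

Definition FF (n : nat) (t : R) := (2*INR n+3) * sin t * (2 * cos t + cos ((2*INR n+3)*t)) - 3 * cos t * sin ((2*INR n+3)*t).
Definition BB (t : R) := 32/9 * sin t ^ 5 * cos t * (4*cos t*cos t - 1)^2.

Lemma PI_gt3 : 3 < PI.
Proof. pose proof PI2_3_2. lra. Qed.

Lemma basic_t : forall t, 0 < t < PI/3 -> 0 < sin t /\ 1/2 < cos t /\ cos t < 1.
Proof.
  intros t Ht. pose proof PI_gt3. pose proof PI_4.
  assert (Hs : 0 < sin t) by (apply sin_gt_0; lra).
  split; [exact Hs|]. split.
  - rewrite <- cos_PI3. apply cos_decreasing_1; lra.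
  - pose proof (sc1 t). assert (cos t <= 1) by apply COS_bound. nra.
Qed.

Lemma region1 : forall n t, (3 <= n)%nat -> 0 < t < PI/3 -> INR (n+1) * t <= PI -> FF n t > BB t.
Proof.
  intros n t Hn Ht H1.
  destruct (basic_t t Ht) as [Hs [Hc1 Hc2]].
  pose proof (Phi_closed (n+1) t) as HP.
  rewrite plus_INR in HP. simpl (INR 1) in HP.
  replace (2 * (INR n + 1) + 1) with (2*INR n+3) in HP by ring.
  replace (n+1)%nat with (2 + (n-1))%nat in HP, H1 by lia.
  assert (HG := Phi_ge (n-1) t ltac:(lra) ltac:(lra) H1).
  unfold FF, BB. rewrite <- HP.
  set (s := sin t) in *. set (c := cos t) in *.
  assert (H8 : 8*s*Phi (2 + (n-1)) t >= 32*(s*s*s*s*s)*c).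
  { assert (8*s*Phi (2 + (n-1)) t >= 8*s*(4*(s*s*s*s)*c)) by (apply Rmult_ge_compat_l; lra). lra. }
  assert (Hw : 0 < 4*c*c-1 < 3) by nra.
  assert (Hw2 : (4*c*c-1)^2 < 9) by (simpl; nra).
  assert (Hp : 0 < s*s*s*s*s*c) by (repeat apply Rmult_lt_0_compat; lra).
  assert (32/9 * s^5*c*(4*c*c-1)^2 < 32/9*(s*s*s*s*s*c)*9).
  { replace (32/9 * s^5*c*(4*c*c-1)^2) with (32/9*(s*s*s*s*s*c)*(4*c*c-1)^2) by (simpl; ring).
    apply Rmult_lt_compat_l; lra. }
  lra.
Qed.

Lemma FF_G : forall n t, (3 <= n)%nat -> 0 < t < PI/3 ->
  (let N := INR n + 3/2 in let s := sin t in let c := cos t in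
   4*N*N*s*s*(4*c*c-1) - 9*N*s*s*c*c - 9*c*c > 0) -> FF n t > BB t.
Proof.
  intros n t Hn Ht Hcond. simpl in Hcond.
  destruct (basic_t t Ht) as [Hs [Hc1 Hc2]].
  assert (HN : 3 <= INR n) by (replace 3 with (INR 3) by (simpl; ring); apply le_INR; lia).
  unfold FF, BB.
  set (y := (2 * INR n + 3) * t).
  replace ((2 * INR n + 3) * sin t * (2 * cos t + cos y) - 3 * cos t * sin y)
    with (2*(INR n + 3/2)*sin t*(2*cos t + cos y) - 3*cos t*sin y) by field.
  apply G_core; try lra.
  - apply sc1.
  - pose proof (sc1 y). lra.
  - nra.
Qed.

Lemma regionG1 : forall n t, (3 <= n)%nat -> 0 < t < PI/3 -> t <= 9/10 -> PI < (INR n + 1) * t -> FF n t > BB t.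
Proof.
  intros n t Hn Ht Ht9 HP. apply FF_G; auto. simpl.
  destruct (basic_t t Ht) as [Hs [Hc1 Hc2]].
  assert (HN : 3 <= INR n) by (replace 3 with (INR 3) by (simpl; ring); apply le_INR; lia).
  pose proof PI_gt3.
  set (N := INR n + 3/2). set (s := sin t). set (c := cos t).
  assert (Hs1 : t - t^3/6 <= s) by (apply sin_ge3; lra).
  assert (Hc3 : 1 - t^2/2 <= c) by (apply cos_ge2; lra).
  simpl in Hs1, Hc3.
  assert (Hs2 : 865/1000*t <= s) by nra.
  assert (HNt : 3 <= N*t) by (unfold N; nra).
  assert (HNs : 5/2 <= N*s).
  { assert (N*(865/1000*t) <= N*s) by (apply Rmult_le_compat_l; unfold N; lra). lra. }
  assert (Hc4 : 595/1000 <= c) by nra.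
  assert (Hcc : 354/1000 <= c*c) by nra.
  set (w := 4*c*c-1).
  assert (T1 : 0 <= N*s*s*(2*N*w - 9*c*c)).
  { assert (0 <= 2*N*w - 9*c*c) by (unfold w, N in *; nra).
    assert (0 <= N*s*s) by (unfold N in *; nra). nra. }
  assert (T2 : 0 < 2*(N*s)*(N*s)*w - 9*c*c).
  { assert (6 <= (N*s)*(N*s)) by nra. unfold w in *. nra. }
  assert (E : 4*N*N*s*s*w - 9*N*s*s*c*c - 9*c*c = N*s*s*(2*N*w - 9*c*c) + (2*(N*s)*(N*s)*w - 9*c*c)) by ring.
  unfold w in E. lra.
Qed.

Lemma regionG2 : forall n t, (3 <= n)%nat -> 0 < t < PI/3 -> 9/10 < t ->
  1 / (2 * (INR n + 3/2)) <= PI/3 - t -> FF n t > BB t.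
Proof.
  intros n t Hn Ht Ht9 He. apply FF_G; auto. simpl.
  destruct (basic_t t Ht) as [Hs [Hc1 Hc2]].
  assert (HN : 3 <= INR n) by (replace 3 with (INR 3) by (simpl; ring); apply le_INR; lia).
  pose proof PI_gt3. pose proof PI_4.
  set (N := INR n + 3/2) in *.
  set (e := PI/3 - t) in *.
  assert (Hs1 : t - t^3/6 <= sin t) by (apply sin_ge3; lra).
  simpl in Hs1.
  assert (Ht43 : t <= 4/3) by lra.
  assert (Hf : t - t*(t*(t*1))/6 - 7785/10000 = (t-9/10)*(1 - (t*t+9/10*t+81/100)/6)) by field.
  assert (0 <= (t-9/10)*(1 - (t*t+9/10*t+81/100)/6)) by (apply Rmult_le_pos; nra).
  assert (Hs2 : 7785/10000 <= sin t) by lra.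
  set (s := sin t) in *. set (c := cos t) in *.
  assert (Hsc := sc1 t). fold s c in Hsc.
  assert (Hcc : c*c <= 395/1000) by nra.
  assert (Hw : 4*c*c - 1 = 1 - cos (2*e) + sqrt 3 * sin (2*e)).
  { assert (E1 : 4*c*c-1 = 2 * cos (2*t) + 1) by (unfold c; rewrite cos_2a_cos; ring).
    replace (2*t) with (2*(PI/3) - 2*e) in E1 by (unfold e; ring).
    rewrite cos_minus, cos_2PI3, sin_2PI3 in E1. lra. }
  assert (HN0 : 0 < 2*N) by (unfold N; lra).
  assert (He0 : 0 <= 2*e) by (assert (0 < 1 / (2*N)) by (apply Rdiv_lt_0_compat; lra); lra).
  assert (He1 : 2*e <= 867/1000) by (unfold e; lra).
  assert (Hsin : 2*e - (2*e)^3/6 <= sin (2*e)) by (apply sin_ge3; lra).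
  simpl in Hsin.
  assert (Hsin2 : 8747/10000*(2*e) <= sin (2*e)) by nra.
  assert (Hcos : cos (2*e) <= 1) by apply COS_bound.
  assert (Hr : 1732/1000 <= sqrt 3).
  { assert (Hr0 := Rlt_sqrt3_0). assert (Hr2 := sqrt_sqrt 3 ltac:(lra)). nra. }
  assert (HNe : 1 <= N * (2*e)).
  {
    assert (N*(2*e) = (2*N)*e) by ring.
    assert ((2*N)*(1/(2*N)) = 1) by (field; lra).
    assert ((2*N)*(1/(2*N)) <= (2*N)*e) by (apply Rmult_le_compat_l; lra). lra. }
  assert (HNw : 15/10 <= N*(4*c*c-1)).
  { rewrite Hw.
    assert (0 <= sqrt 3 * sin (2*e) - 1732/1000 * (8747/10000*(2*e))).
    { assert (1732/1000 * (8747/10000*(2*e)) <= sqrt 3 * (8747/10000*(2*e))) by (apply Rmult_le_compat_r; lra).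
      assert (sqrt 3 * (8747/10000*(2*e)) <= sqrt 3 * sin (2*e)) by (apply Rmult_le_compat_l; lra). lra. }
    assert (HN1 : 0 <= N) by (unfold N; lra).
    assert (N * (1 - cos (2 * e)) >= 0) by (apply Rle_ge, Rmult_le_pos; lra).
    assert (N * (sqrt 3 * sin (2*e) - 1732/1000 * (8747/10000*(2*e))) >= 0) by (apply Rle_ge, Rmult_le_pos; lra).
    nra. }
  assert (HNs2 : 27/10 <= N*s*s) by (unfold N in *; nra).
  assert (T : 4*N*(4*c*c-1) - 9*c*c >= 24/10) by lra.
  assert (T2 : N*s*s*(4*N*(4*c*c-1) - 9*c*c) >= 27/10*(24/10)) by (apply Rmult_ge_compat; lra).
  assert (E : 4*N*N*s*s*(4*c*c-1) - 9*N*s*s*c*c - 9*c*c = N*s*s*(4*N*(4*c*c-1) - 9*c*c) - 9*c*c) by ring.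
  lra.
Qed.

Lemma cos_triple : forall z, cos (3*z) = 4*(cos z*cos z*cos z) - 3*cos z.
Proof.
  intro z. replace (3*z) with (2*z + z) by ring. rewrite cos_plus, sin_2a, cos_2a.
  pose proof (sc1 z). nsatz.
Qed.

Lemma region3 : forall n t, (3 <= n)%nat -> 0 < t < PI/3 ->
  PI/3 - t < 1 / (2 * (INR n + 3/2)) -> FF n t > BB t.
Proof.
  intros n t Hn Ht He.
  assert (HN : 3 <= INR n) by (replace 3 with (INR 3) by (simpl; ring); apply le_INR; lia).
  pose proof PI_gt3. pose proof PI_4.
  set (N := INR n + 3/2) in *.
  assert (HN0 : 0 < 2*N) by (unfold N; lra).
  set (e := PI/3 - t) in *.
  assert (He0 : 0 < e) by (unfold e; lra).
  assert (HNe : N*e <= 1/2).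
  { assert ((2*N)*e <= (2*N)*(1/(2*N))) by (apply Rmult_le_compat_l; lra).
    assert ((2*N)*(1/(2*N)) = 1) by (field; lra). lra. }
  assert (He9 : e <= 1/9) by (unfold N in *; nra).
  assert (Ht' : t = PI/3 - e) by (unfold e; ring).
  set (r := sqrt 3).
  assert (Hr0 : 0 < r) by apply Rlt_sqrt3_0.
  assert (Hr2 : r*r = 3) by (apply sqrt_sqrt; lra).
  set (a := cos e). set (b := sin e).
  assert (Ha1 : 1 - e^2/2 <= a) by (apply cos_ge2; lra).
  assert (Ha2 : a <= 1) by apply COS_bound.
  assert (Hb1 : e - e^3/6 <= b) by (apply sin_ge3; lra).
  assert (Hb2 : b <= e) by (apply sin_le_id; lra).
  assert (Hs : sin t = r/2*a - b/2) by (rewrite Ht', sin_minus, sin_PI3, cos_PI3; unfold r, a, b; field).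
  assert (Hc : cos t = a/2 + r/2*b) by (rewrite Ht', cos_minus, sin_PI3, cos_PI3; unfold r, a, b; field).
  pose proof (R3geom r a b e Hr2 Hr0 He0 He9 Ha1 Ha2 Hb1 Hb2) as HG. cbv zeta in HG.
  rewrite <- Hs, <- Hc in HG.
  destruct HG as [Hs1 [[Hc1 Hc2] [HE [Hw1 Hw2]]]].
  set (s := sin t) in *. set (c := cos t) in *.
  assert (Hs3 : s <= 1) by apply SIN_bound.
  assert (HB : BB t <= 31*e^2).
  { unfold BB. fold s c.
    assert (H5 : s^5 <= 1) by (rewrite <- (pow1 5); apply pow_incr; lra).
    assert (H50 : 0 <= s^5) by (simpl; repeat apply Rmult_le_pos; lra).
    assert (Hw3 : (4*c*c-1)^2 <= (19/5*e)^2) by (simpl; nra).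
    assert (Hw4 : 0 <= (4*c*c-1)^2) by (simpl; nra).
    assert (H6 : s^5*c <= 3/5) by nra.
    assert (H7 : 0 <= s^5*c) by nra.
    assert (s^5*c*(4*c*c-1)^2 <= 3/5*(19/5*e)^2) by (apply Rmult_le_compat; lra).
    simpl in *. nra. }
  set (C := cos (N*t)). set (D := sin (N*t)).
  assert (HF : FF n t = 2*N*s*(2*c + 2*C*C - 1) - 6*c*D*C).
  { unfold FF. replace ((2*INR n+3)*t) with (2*(N*t)) by (unfold N; field).
    rewrite cos_2a_cos, sin_2a. fold s c C D. unfold N. field. }
  rewrite HF.
  set (al := N*(PI/3)). set (th := N*e).
  assert (Hth0 : 0 < th) by (unfold th; nra).
  assert (HNe2 : th <= 1/2) by (unfold th; lra).
  assert (HNt : N*t = al - th) by (unfold al, th; rewrite Ht'; ring).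
  assert (HC : C = cos al * cos th + sin al * sin th) by (unfold C; rewrite HNt, cos_minus; ring).
  assert (HD : D = sin al * cos th - cos al * sin th) by (unfold D; rewrite HNt, sin_minus; ring).
  set (u := cos (2*al)).
  assert (Hu : (u+1)*((2*u-1)*(2*u-1)) = 0).
  { assert (H3 : cos (3*(2*al)) = -1).
    { replace (3*(2*al)) with (PI + 2*INR (Datatypes.S n)*PI) by (unfold al, N; rewrite S_INR; field).
      rewrite cos_period. apply cos_PI. }
    rewrite cos_triple in H3. fold u in H3. nra. }
  assert (Hu2 : u = 2*cos al*cos al - 1) by (unfold u; apply cos_2a_cos).
  pose proof (sc1 al) as Hal.
  assert (Hsg1 : th - th^3/6 <= sin th) by (apply sin_ge3; lra).
  assert (Hsg2 : sin th <= th) by (apply sin_le_id; lra).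
  assert (Hkp1 : 1 - th^2/2 <= cos th) by (apply cos_ge2; lra).
  assert (Hkp2 : cos th <= 1) by apply COS_bound.
  pose proof (sc1 th) as Hth.
  destruct (Rmult_integral _ _ Hu) as [Hu1 | Hu1].
  -
    assert (Hca : cos al * cos al = 0) by nra.
    assert (Hca0 : cos al = 0) by nra.
    assert (Hsa : sin al * sin al = 1) by nra.
    assert (HF2 : 2*N*s*(2*c + 2*C*C - 1) - 6*c*D*C = 2*N*s*(2*c + 2*sin th*sin th - 1) - 6*c*sin th*cos th).
    { rewrite HC, HD, Hca0. replace (2*N*s*(2*c + 2*(0*cos th + sin al*sin th)*(0*cos th + sin al*sin th) - 1) - 6*c*(sin al*cos th - 0*sin th)*(0*cos th + sin al*sin th))
        with (2*N*s*(2*c + 2*(sin al*sin al)*sin th*sin th - 1) - 6*c*(sin al*sin al)*sin th*cos th) by ring.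
      rewrite Hsa. ring. }
    rewrite HF2.
    apply R3A with (e := e); try lra.
    + unfold N; lra.
    + fold th; lra.
    + fold th; lra.
    + split; simpl in Hkp1; nra.
  -
    assert (Hu3 : u = 1/2) by nra.
    assert (Hca : cos al * cos al = 3/4) by lra.
    assert (Hsa : sin al * sin al = 1/4) by lra.
    assert (HP : (cos al * sin al)*(cos al * sin al) = 3/16) by nra.
    assert (HP2 : -4331/10000 <= cos al * sin al) by nra.
    assert (Hks0 : 0 <= cos th * sin th) by (simpl in Hkp1, Hsg1; apply Rmult_le_pos; nra).
    assert (Hks1 : cos th * sin th <= 1/2) by (simpl in Hkp1, Hsg1; nra).
    assert (HCC : 19/100 <= C*C).
    { rewrite HC.
      replace ((cos al * cos th + sin al * sin th) * (cos al * cos th + sin al * sin th)) with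
        ((cos al*cos al)*(cos th*cos th) + (sin al*sin al)*(sin th*sin th) + 2*(cos al*sin al)*(cos th*sin th)) by ring.
      rewrite Hca, Hsa.
      assert (-4331/10000*(cos th*sin th) <= (cos al*sin al)*(cos th*sin th)) by (apply Rmult_le_compat_r; lra).
      assert (sin th * sin th <= 1/4) by (simpl in Hsg1; nra).
      nra. }
    assert (HCD : C*C + D*D = 1) by (unfold C, D; pose proof (sc1 (N*t)); lra).
    apply R3B with (e := e); try lra.
    unfold N; lra.
Qed.

Lemma main_ineq : forall n t, (3 <= n)%nat -> 0 < t < PI/3 -> FF n t > BB t.
Proof.
  intros n t Hn Ht.
  destruct (Rle_lt_dec (INR (n+1) * t) PI) as [H1|H1].
  - apply region1; auto.
  - rewrite plus_INR in H1. simpl (INR 1) in H1.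
    destruct (Rle_lt_dec t (9/10)) as [H2|H2].
    + apply regionG1; auto.
    + destruct (Rle_lt_dec (1 / (2 * (INR n + 3/2))) (PI/3 - t)) as [H3|H3].
      * apply regionG2; auto.
      * apply region3; auto.
Qed.

Lemma cos_gt_half : forall x, 0 < x < 2*PI/3 -> -1/2 < cos x.
Proof.
  intros x Hx. pose proof PI_gt3. rewrite <- cos_2PI3. apply cos_decreasing_1; lra.
Qed.

Lemma S1 : forall x, S 1 x = 2 * sin x.
Proof. intro x. unfold S, sum_f. simpl. replace (1*x) with x by ring. ring. Qed.

Lemma S2 : forall x, S 2 x = sin x * (6 + 8 * cos x).
Proof.
  intro x. unfold S, sum_f. simpl.
  replace (1*x) with x by ring.
  replace ((1+1)*x) with (2*x) by ring. rewrite sin_2a. ring.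
Qed.

Lemma part1 : forall (n : nat) (x : R), (1 <= n)%nat -> 0 < x < 2 * PI / 3 ->
     S n x > 2 / 9 * sin x * (1 + 2 * cos x) ^ 2.
Proof.
  intros n x Hn Hx. pose proof PI_gt3.
  assert (Hsx : 0 < sin x) by (apply sin_gt_0; lra).
  assert (Hcx := cos_gt_half x Hx).
  assert (Hcx2 : cos x <= 1) by apply COS_bound.
  assert (Hcx3 : cos x < 1).
  { assert (0 < sin (x/2)) by (apply sin_gt_0; lra).
    replace x with (2*(x/2)) by field. rewrite cos_2a_sin. nra. }
  destruct (Compare_dec.le_lt_dec 3 n) as [H3|H3].
  - rewrite S_Sq by lia.
    set (t := x/2).
    assert (Ht : 0 < t < PI/3) by (unfold t; lra).
    replace x with (2*t) in * by (unfold t; field).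
    pose proof (Sq_closed n t) as HS. fold (FF n t) in HS.
    pose proof (main_ineq n t H3 Ht) as HM.
    destruct (basic_t t Ht) as [Hs [Hc1 Hc2]].
    rewrite sin_2a, cos_2a_cos.
    unfold BB in HM. rewrite <- HS in HM.
    set (s := sin t) in *. set (c := cos t) in *.
    assert (H4 : 0 < 8*(s*s*s*s)) by (repeat apply Rmult_lt_0_compat; lra).
    apply (Rmult_lt_reg_l (8*(s*s*s*s))); auto.
    replace (8 * (s * s * s * s) * (2 / 9 * (2 * s * c) * (1 + 2 * (2 * c * c - 1)) ^ 2))
      with (32 / 9 * s ^ 5 * c * (4 * c * c - 1) ^ 2) by (simpl; field).
    lra.
  - assert (n = 1%nat \/ n = 2%nat) as [-> | ->] by lia.
    + rewrite S1. set (w := 1 + 2*cos x).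
      assert (0 < w < 3) by (unfold w; lra).
      assert (w^2 < 9) by (simpl; nra).
      assert (2/9 * sin x * w^2 < 2/9*sin x * 9) by (apply Rmult_lt_compat_l; nra).
      lra.
    + rewrite S2. set (w := 1 + 2*cos x).
      assert (0 < w < 3) by (unfold w; lra).
      assert (Hw : 6 + 8*cos x = 2 + 4*w) by (unfold w; ring).
      assert (2/9 * w^2 < 2 + 4*w) by (simpl; nra).
      rewrite Hw.
      assert (sin x * (2/9 * w^2) < sin x * (2 + 4*w)) by (apply Rmult_lt_compat_l; lra).
      replace (2 / 9 * sin x * w ^ 2) with (sin x * (2/9 * w^2)) by ring. lra.
Qed.

Lemma part2 : forall lambda : R, lambda > 2 / 9 ->
     ~ (forall (n : nat) (x : R), (1 <= n)%nat -> 0 < x < 2 * PI / 3 ->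
          S n x > lambda * sin x * (1 + 2 * cos x) ^ 2).
Proof.
  intros l Hl H. pose proof PI_gt3.
  set (d := 9 - 2/l).
  assert (Hd : 0 < d).
  { unfold d. assert (2/l < 9). { apply (Rmult_lt_reg_l l); [lra|]. field_simplify; lra. } lra. }
  set (x := Rmin 1 (d/12)).
  assert (Hx0 : 0 < x) by (unfold x; apply Rmin_glb_lt; lra).
  assert (Hx1 : x <= 1) by (unfold x; apply Rmin_l).
  assert (Hx2 : x <= d/12) by (unfold x; apply Rmin_r).
  specialize (H 1%nat x ltac:(lia) ltac:(lra)).
  rewrite S1 in H.
  assert (Hsx : 0 < sin x) by (apply sin_gt_0; lra).
  assert (Hc : 1 - x^2/2 <= cos x) by (apply cos_ge2; lra).
  simpl in Hc.
  assert (Hw : 3 - x*x <= 1 + 2*cos x) by lra.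
  assert (Hw0 : 0 <= 3 - x*x) by nra.
  assert (Hq : (3-x*x)*(3-x*x) <= (1+2*cos x)*(1+2*cos x)) by (apply Rmult_le_compat; lra).
  assert (Hxx : x*x <= x) by nra.
  assert (Hx4 : 0 <= x*x*(x*x)) by nra.
  assert (Hw2 : 9 - d/2 <= (1 + 2*cos x)^2) by (simpl; nra).
  assert (Hld : l * (9 - d/2) = 9*l/2 + 1) by (unfold d; field; lra).
  assert (l*(9 - d/2) <= l*(1+2*cos x)^2) by (apply Rmult_le_compat_l; lra).
  assert (2 < l*(1+2*cos x)^2) by lra.
  assert (sin x * 2 < sin x * (l*(1+2*cos x)^2)) by (apply Rmult_lt_compat_l; lra).
  lra.
Qed.

Theorem theorem5 :
  (forall (n : nat) (x : R), (1 <= n)%nat -> 0 < x < 2 * PI / 3 ->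
     S n x > 2 / 9 * sin x * (1 + 2 * cos x) ^ 2)
  /\
  (forall lambda : R, lambda > 2 / 9 ->
     ~ (forall (n : nat) (x : R), (1 <= n)%nat -> 0 < x < 2 * PI / 3 ->
          S n x > lambda * sin x * (1 + 2 * cos x) ^ 2)).
Proof. split; [exact part1 | exact part2]. Qed.
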